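(* Let $n$ be a positive integer. A UC-move is realized by a sequence of $V^{n}$-moves and welded Reidemeister moves if and only if $n=1$.
   Context: A virtual link diagram is the image of an immersion of finitely many ordered, oriented circles in the plane with transverse double points, each a classical crossing (with over/under information) or a virtual crossing. Welded Reidemeister moves are R1–R3, the virtual moves VR1–VR3 (Reidemeister moves with only virtual crossings) and VR4 (a strand with only virtual crossings slides past a classical crossing), and the OC move (a strand passing over two other strands at classical crossings, those two strands crossing each other virtually, may be slid across that virtual crossing). The UC move is the same as OC with ''over'' replaced by ''under''. The $V^{n}$-move: inside a disk the diagram consists of two arcs $a,b$ oriented in the same direction; on one side they are parallel without crossings; on the other side the tangle is the $2$-braid word $(\sigma\tau)^{n}$, where $\sigma$ is a classical crossing with $b$ over $a$ and $\tau$ a virtual crossing (so $n$ classical crossings, all with $b$ over and of the same sign, alternating with $n$ virtual crossings). The move replaces one side by the other. (The $V^{1}$-move is equivalent to crossing virtualization, which replaces a classical crossing by a virtual one.) *)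

(* Defs.v *)
(* Virtual link diagrams modulo planar isotopy and the
   virtual moves VR1-VR4 are encoded by Gauss diagrams. *)
From Stdlib Require Import Relations.
From mathcomp Require Import all_boot.

Set Implicit Arguments.
Unset Strict Implicit.
Unset Printing Implicit Defensive.

(* An endpoint of an arrow (= classical crossing): (crossing id, is the
   over-crossing endpoint?, sign of the crossing (true = positive)). *)
Definition letter := (nat * bool * bool)%type.
Definition lid (x : letter) : nat := x.1.1.
Definition lover (x : letter) : bool := x.1.2.
Definition lsgn (x : letter) : bool := x.2.

(* A Gauss diagram: ordered list of components; each component is the cyclic
   word (read from a base point, in the direction of orientation) of the
   classical crossings met along it. *)
Definition gdiag := seq (seq letter).

Definition ids (D : gdiag) : seq nat := map lid (flatten D).

Definition gauss_wf (D : gdiag) : Prop :=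
  forall i, i \in ids D ->
    count (fun x => (lid x == i) && lover x) (flatten D) = 1 /\
    count (fun x => (lid x == i) && ~~ lover x) (flatten D) = 1 /\
    (forall x y, x \in flatten D -> y \in flatten D ->
       lid x = i -> lid y = i -> lsgn x = lsgn y).

(* Templates: diagrams with numbered holes, used to describe local moves. *)
Definition tentry := (letter + nat)%type.
Definition template := seq (seq tentry).

Definition fill (T : template) (ws : seq (seq letter)) : gdiag :=
  map (fun c => flatten (map (fun e : tentry =>
         match e with inl x => [:: x] | inr k => nth [::] ws k end) c)) T.

Definition erase (T : template) : gdiag := fill T [::].

Definition holes_ok (T : template) (k : nat) : Prop :=
  (forall h, h < k -> count (pred1 (inr h : tentry)) (flatten T) = 1) /\
  (forall h, (inr h : tentry) \in flatten T -> h < k).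

Definition fresh (T : template) (l : seq nat) : Prop :=
  uniq l /\ all (fun i => i \notin ids (erase T)) l.

Definition ord2 (c : bool) (x y : letter) : seq letter :=
  if c then [:: x; y] else [:: y; x].

Definition rot_move (D D' : gdiag) : Prop :=
  exists D1 D2 c k, D = D1 ++ c :: D2 /\ D' = D1 ++ rot k c :: D2.

Definition relabel_move (D D' : gdiag) : Prop :=
  exists f : nat -> nat, injective f /\
    D' = map (map (fun x => (f (lid x), lover x, lsgn x))) D.

Definition R1_move (D D' : gdiag) : Prop :=
  exists T i o s, holes_ok T 1 /\ fresh T [:: i] /\
    D = fill T [:: [::]] /\ D' = fill T [:: [:: (i, o, s); (i, ~~ o, s)]].

Definition R2_move (D D' : gdiag) : Prop :=
  exists T i j s (rv : bool), holes_ok T 2 /\ fresh T [:: i; j] /\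
    D = fill T [:: [::]; [::]] /\
    D' = fill T [:: [:: (i, true, s); (j, true, ~~ s)];
                    if rv then [:: (j, false, ~~ s); (i, false, s)]
                          else [:: (i, false, s); (j, false, ~~ s)]].

(* strands: top carries over-ends of i (top/mid) and j (top/bot); middle
   carries the under-end of i and over-end of k (mid/bot); bottom carries the
   under-ends of j and k.  t, m, b record the order on each strand. *)
Definition r3_words (i j k : nat) (si sj sk t m b : bool) : seq (seq letter) :=
  [:: ord2 t (i, true, si) (j, true, sj);
      ord2 m (i, false, si) (k, true, sk);
      ord2 b (j, false, sj) (k, false, sk)].

Definition R3_move (D D' : gdiag) : Prop :=
  exists T i j k si sj sk t m b, holes_ok T 3 /\ fresh T [:: i; j; k] /\
    (si == sj) = (m == b) /\ (si == sk) = (t == b) /\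
    D = fill T (r3_words i j k si sj sk t m b) /\
    D' = fill T (r3_words i j k si sj sk (~~ t) (~~ m) (~~ b)).

Definition OC_move (D D' : gdiag) : Prop :=
  exists T (x y : letter), holes_ok T 1 /\ lover x /\ lover y /\
    lid x != lid y /\ D = fill T [:: [:: x; y]] /\ D' = fill T [:: [:: y; x]].

Definition UC_move (D D' : gdiag) : Prop :=
  exists T (x y : letter), holes_ok T 1 /\ ~~ lover x /\ ~~ lover y /\
    lid x != lid y /\ D = fill T [:: [:: x; y]] /\ D' = fill T [:: [:: y; x]].

(* V^n: n parallel crossings, same sign, arc b over arc a, in the same
   order along both arcs. *)
Definition Vn_move (n : nat) (D D' : gdiag) : Prop :=
  exists T s (l : seq nat), holes_ok T 2 /\ size l = n /\ fresh T l /\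
    D = fill T [:: [::]; [::]] /\
    D' = fill T [:: [seq (i, true, s) | i <- l]; [seq (i, false, s) | i <- l]].

Definition wVn_step (n : nat) (D D' : gdiag) : Prop :=
  gauss_wf D /\ gauss_wf D' /\
  (rot_move D D' \/ relabel_move D D' \/ R1_move D D' \/ R2_move D D' \/
   R3_move D D' \/ OC_move D D' \/ Vn_move n D D').

Definition UC_step (D D' : gdiag) : Prop :=
  gauss_wf D /\ gauss_wf D' /\ UC_move D D'.

Definition UC_realized_by_wVn (n : nat) : Prop :=
  forall D D', UC_step D D' -> clos_refl_sym_trans gdiag (wVn_step n) D D'.

(* Main.v *)
Require Import Defs.
From Stdlib Require Import Relations.
From mathcomp Require Import all_boot.
From mathcomp Require Import all_algebra.
From mathcomp Require Import ring.

Set Implicit Arguments.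
Unset Strict Implicit.
Unset Printing Implicit Defensive.


Definition ent (ws : seq (seq letter)) (e : tentry) : seq letter :=
  match e with inl x => [:: x] | inr k => nth [::] ws k end.
Definition fillc (ws : seq (seq letter)) (t : seq tentry) : seq letter :=
  flatten (map (ent ws) t).

Lemma fillE T ws : fill T ws = map (fillc ws) T.
Proof. by []. Qed.

Lemma fillc_cat ws t1 t2 : fillc ws (t1 ++ t2) = fillc ws t1 ++ fillc ws t2.
Proof. by rewrite /fillc map_cat flatten_cat. Qed.

Lemma fillc_cons ws e t : fillc ws (e :: t) = ent ws e ++ fillc ws t.
Proof. by []. Qed.

Lemma flatten_fill T ws : flatten (fill T ws) = flatten (map (ent ws) (flatten T)).
Proof.
elim: T => //= t T IH; by rewrite IH map_cat flatten_cat.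
Qed.

Lemma mem_fill T ws l : l \in flatten (fill T ws) ->
  (inl l \in flatten T) \/ exists2 k, inr k \in flatten T & l \in nth [::] ws k.
Proof.
rewrite flatten_fill => /flatten_mapP [[x|k] He] /=.
  by rewrite inE => /eqP ->; left.
by move=> Hl; right; exists k.
Qed.

Lemma mem_fill_inl T ws l : inl l \in flatten T -> l \in flatten (fill T ws).
Proof.
move=> H; rewrite flatten_fill; apply/flatten_mapP; exists (inl l) => //=.
by rewrite inE.
Qed.

Lemma mem_fill_hole T ws k l : inr k \in flatten T -> l \in nth [::] ws k ->
  l \in flatten (fill T ws).
Proof. move=> H1 H2; rewrite flatten_fill; apply/flatten_mapP; by exists (inr k). Qed.

Lemma size_fill T ws : size (fill T ws) = size T.
Proof. by rewrite size_map. Qed.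

Lemma nth_fill T ws j : j < size T -> nth [::] (fill T ws) j = fillc ws (nth [::] T j).
Proof. by move=> Hj; rewrite fillE (nth_map [::]). Qed.

Section Run.
Variable X : eqType.
Variable op : bool -> X -> X -> X.

Fixpoint run (c : nat -> X) (w : seq letter) (x : X) : option X :=
  match w with
  | [::] => Some x
  | l :: w' => if lover l then (if x == c (lid l) then run c w' x else None)
               else run c w' (op (lsgn l) x (c (lid l)))
  end.

Lemma run_cat c w1 w2 x : run c (w1 ++ w2) x = obind (run c w2) (run c w1 x).
Proof.
elim: w1 x => //= l w1 IH x; case: (lover l); last by rewrite IH.
by case: eqP.
Qed.

Lemma run_ext c1 c2 w x : (forall l, l \in w -> c1 (lid l) = c2 (lid l)) ->
  run c1 w x = run c2 w x.
Proof.
elim: w x => //= l w IH x H.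
have H' : forall l', l' \in w -> c1 (lid l') = c2 (lid l').
  by move=> l' Hl'; apply: H; rewrite inE Hl' orbT.
rewrite H; last by rewrite inE eqxx.
by case: (lover l); rewrite ?IH.
Qed.

Definition valid c (a : nat -> X) (D : gdiag) :=
  forall k, k < size D -> run c (nth [::] D k) (a k) = Some (a k).
Definition trivial c (a : nat -> X) (D : gdiag) :=
  exists z, (forall k, k < size D -> a k = z) /\ (forall i, i \in ids D -> c i = z).
Definition PP (D : gdiag) := exists c a, valid c a D /\ ~ trivial c a D.

Hypothesis opI : forall s x, op s x x = x.

Lemma run_const c w z : (forall l, l \in w -> c (lid l) = z) -> run c w z = Some z.
Proof.
elim: w => //= l w IH H.
have H' : forall l', l' \in w -> c (lid l') = z.
  by move=> l' Hl'; apply: H; rewrite inE Hl' orbT.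
rewrite H; last by rewrite inE eqxx.
by rewrite opI eqxx IH //; case: (lover l).
Qed.

Lemma runT_eq c1 c2 ws1 ws2 t x :
  (forall l, inl l \in t -> c1 (lid l) = c2 (lid l)) ->
  (forall pre k post y, t = pre ++ inr k :: post ->
     run c1 (fillc ws1 pre) x = Some y ->
     run c1 (nth [::] ws1 k) y = run c2 (nth [::] ws2 k) y) ->
  run c1 (fillc ws1 t) x = run c2 (fillc ws2 t) x.
Proof.
elim: t x => //= e t IH x Hl Hh.
rewrite !fillc_cons !run_cat.
have E : run c1 (ent ws1 e) x = run c2 (ent ws2 e) x.
  case: e Hl Hh => [l|k] Hl Hh /=.
    by rewrite Hl // inE eqxx.
  exact: (Hh [::] k t x).
rewrite -E; case Ee: (run c1 (ent ws1 e) x) => [x'|] //=.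
apply: IH.
  move=> l Hl'; apply: Hl; by rewrite inE Hl' orbT.
move=> pre k post y Ht Hy; apply: (Hh (e :: pre) k post y); first by rewrite Ht.
by rewrite fillc_cons run_cat Ee.
Qed.

Definition input c (a : nat -> X) (T : template) ws k y :=
  exists j pre post, [/\ j < size T, nth [::] T j = pre ++ inr k :: post &
    run c (fillc ws pre) (a j) = Some y].

Lemma fill_valid c1 c2 a T ws1 ws2 :
  valid c1 a (fill T ws1) ->
  (forall l, inl l \in flatten T -> c1 (lid l) = c2 (lid l)) ->
  (forall k y, input c1 a T ws1 k y ->
     run c1 (nth [::] ws1 k) y = run c2 (nth [::] ws2 k) y) ->
  valid c2 a (fill T ws2).
Proof.
move=> Hv Hl Hh j; rewrite size_fill => Hj.
rewrite nth_fill // -(runT_eq (ws1 := ws1) (c1 := c1)).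
- by rewrite -nth_fill //; apply: Hv; rewrite size_fill.
- move=> l Hl'; apply: Hl; apply/flattenP; exists (nth [::] T j) => //.
  exact: mem_nth.
- move=> pre k post y Ht Hy; apply: Hh; by exists j, pre, post.
Qed.

Lemma input_transfer c1 c2 a T ws1 ws2 k y :
  (forall l, inl l \in flatten T -> c1 (lid l) = c2 (lid l)) ->
  (forall k y, input c1 a T ws1 k y ->
     run c1 (nth [::] ws1 k) y = run c2 (nth [::] ws2 k) y) ->
  input c1 a T ws1 k y -> input c2 a T ws2 k y.
Proof.
move=> Hl Hh [j [pre [post [Hj Ht Hy]]]]; exists j, pre, post; split => //.
rewrite -Hy; symmetry; apply: runT_eq.
- move=> l Hl'; apply: Hl; apply/flattenP; exists (nth [::] T j); first exact: mem_nth.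
  by rewrite Ht mem_cat Hl'.
- move=> pre' k' post' y' Hp Hy'; apply: Hh; exists j, pre', (post' ++ inr k :: post).
  by rewrite Ht Hp -catA.
Qed.

Lemma fillc_sub T ws j l : j < size T -> l \in fillc ws (nth [::] T j) ->
  l \in flatten (fill T ws).
Proof.
move=> Hj Hl; apply/flattenP; exists (nth [::] (fill T ws) j).
  by apply: mem_nth; rewrite size_fill.
by rewrite nth_fill.
Qed.

Lemma input_triv c a T ws k y z :
  (forall k, k < size (fill T ws) -> a k = z) ->
  (forall i, i \in ids (fill T ws) -> c i = z) ->
  input c a T ws k y -> y = z.
Proof.
move=> Ha Hc [j [pre [post [Hj Ht Hy]]]].
move: Hy; rewrite Ha ?size_fill // run_const //; first by case.
move=> l Hl; apply: Hc; apply/mapP; exists l => //.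
apply: (fillc_sub Hj); by rewrite Ht fillc_cat mem_cat Hl.
Qed.

Lemma input_some c a T ws k y : valid c a (fill T ws) -> input c a T ws k y ->
  exists y', run c (nth [::] ws k) y = Some y'.
Proof.
move=> Hv [j [pre [post [Hj Ht Hy]]]].
have := Hv j; rewrite size_fill nth_fill // Ht fillc_cat fillc_cons !run_cat Hy /=.
rewrite run_cat => /(_ Hj).
case: (run c (nth [::] ws k) y) => [y' _|] //; by exists y'.
Qed.

Lemma input_ex c a T ws k : valid c a (fill T ws) -> inr k \in flatten T ->
  exists y, input c a T ws k y.
Proof.
move=> Hv /flattenP [t Ht Hk].
pose j := index t T.
have Hj : j < size T by rewrite index_mem.
have Hn : nth [::] T j = t by rewrite nth_index.
pose i := index (inr k) t.
have Ht2 : t = take i t ++ inr k :: drop i.+1 t.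
  by rewrite -{1}(cat_take_drop i t) (drop_nth (inr k)) ?index_mem // nth_index.
have := Hv j; rewrite size_fill nth_fill // Hn Ht2 fillc_cat !run_cat => /(_ Hj).
case E: (run c (fillc ws (take i t)) (a j)) => [y|] //= _.
exists y, j, (take i t), (drop i.+1 t); split => //; by rewrite Hn -Ht2.
Qed.

Lemma notin_pre (T : eqType) (e : T) pre post :
  count (pred1 e) (pre ++ e :: post) = 1 -> e \notin pre.
Proof.
rewrite count_cat /= eqxx add1n addnS => [[]] /eqP.
by rewrite addn_eq0 => /andP [/eqP /count_memPn H _].
Qed.

Lemma count_pre (T : eqType) (e : T) pre post pre' post' :
  count (pred1 e) (pre ++ e :: post) = 1 ->
  pre ++ e :: post = pre' ++ e :: post' -> pre = pre'.
Proof.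
move=> Hc Heq.
have H1 := notin_pre Hc.
have H2 : e \notin pre' by apply: (notin_pre (post := post')); rewrite -Heq.
have : index e (pre ++ e :: post) = index e (pre' ++ e :: post') by rewrite Heq.
rewrite !index_cat (negbTE H1) (negbTE H2) /= eqxx !addn0 => Hs.
have -> : pre = take (size pre) (pre ++ e :: post) by rewrite take_size_cat.
by rewrite Heq Hs take_size_cat.
Qed.

Lemma nth_le_sumn (s : seq nat) i : nth 0 s i <= sumn s.
Proof.
elim: s i => [|x s IH] [|i] //=; first exact: leq_addr.
by apply: leq_trans (IH i) _; exact: leq_addl.
Qed.

Lemma nth2_le_sumn (s : seq nat) i j : i < j -> nth 0 s i + nth 0 s j <= sumn s.
Proof.
elim: s i j => [|x s IH] [|i] [|j] //=; rewrite ?nth_nil //.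
- by move=> _; rewrite leq_add2l nth_le_sumn.
- rewrite ltnS => H; apply: leq_trans (IH _ _ H) _; exact: leq_addl.
Qed.

Lemma input_uniq c a T ws k y y' :
  count (pred1 (inr k)) (flatten T) = 1 ->
  input c a T ws k y -> input c a T ws k y' -> y = y'.
Proof.
move=> Hc [j [pre [post [Hj Ht Hy]]]] [j' [pre' [post' [Hj' Ht' Hy']]]].
have Hcj : forall i, i < size T -> inr k \in nth [::] T i ->
    0 < nth 0 [seq count (pred1 (inr k)) x | x <- T] i.
  move=> i Hi Hin; rewrite (nth_map [::]) // -has_count has_pred1 //.
have Ej : j = j'.
  apply/eqP; apply/negP => /negP Hne.
  have H1 := Hcj j Hj; rewrite Ht mem_cat inE eqxx orbT in H1.
  have H2 := Hcj j' Hj'; rewrite Ht' mem_cat inE eqxx orbT in H2.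
  move: (H1 isT) (H2 isT) => {}H1 {}H2.
  move: Hc; rewrite count_flatten => Hc.
  move: Hne; rewrite neq_ltn => /orP [Hlt|Hlt].
    have := leq_trans (leq_add H1 H2) (nth2_le_sumn [seq count (pred1 (inr k)) x | x <- T] Hlt).
    by rewrite Hc.
  have := leq_trans (leq_add H2 H1) (nth2_le_sumn [seq count (pred1 (inr k)) x | x <- T] Hlt).
  by rewrite Hc.
subst j'.
have Hc1 : count (pred1 (inr k)) (pre ++ inr k :: post) = 1.
  apply/eqP; rewrite eqn_leq; apply/andP; split.
    rewrite -Hc count_flatten -Ht.
    by rewrite -(nth_map [::] 0 (count (pred1 (inr k)))) // nth_le_sumn.
  by rewrite count_cat /= eqxx add1n addnS.
have Ep := count_pre Hc1 (etrans (esym Ht) Ht'); subst pre'.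
by move: Hy; rewrite Hy' => [[]].
Qed.

Lemma fill_P c1 c2 a T ws1 ws2 :
  valid c1 a (fill T ws1) -> ~ trivial c1 a (fill T ws1) ->
  (forall l, inl l \in flatten T -> c1 (lid l) = c2 (lid l)) ->
  (forall k y, input c1 a T ws1 k y ->
     run c1 (nth [::] ws1 k) y = run c2 (nth [::] ws2 k) y) ->
  (forall z, (forall k y, input c1 a T ws1 k y -> y = z) ->
     forall k l, inr k \in flatten T -> l \in nth [::] ws1 k -> c1 (lid l) = z) ->
  PP (fill T ws2).
Proof.
move=> Hv Hnt Hl Hh Hz; exists c2, a; split; first exact: fill_valid Hv Hl Hh.
move=> [z [Ha Hc]]; apply: Hnt; exists z; split.
  by move=> k; rewrite !size_fill => Hk; apply: Ha; rewrite size_fill.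
have Hin : forall k y, input c1 a T ws1 k y -> y = z.
  move=> k y Hi; apply: (input_triv Ha Hc); exact: input_transfer Hl Hh Hi.
move=> i /mapP [l Hl' ->]; case: (mem_fill Hl') => [Hi|[k Hk Hlk]].
  rewrite Hl //; apply: Hc; apply/mapP; exists l => //; exact: mem_fill_inl.
exact: Hz Hin k l Hk Hlk.
Qed.

End Run.


Section Moves.
Variable X : eqType.
Variable op : bool -> X -> X -> X.
Hypothesis opI : forall s x, op s x x = x.
Hypothesis opK : forall s x y, op (~~ s) (op s x y) y = x.
Hypothesis opD : forall d e a z y, op e (op d a z) y = op d (op e a y) (op e z y).

Notation run := (run op).
Notation valid := (valid op).
Notation trivial := (@trivial X).
Notation input := (input op).
Notation PP := (PP op).

Lemma input_mem c a T ws k y : input c a T ws k y -> inr k \in flatten T.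
Proof.
move=> [j [pre [post [Hj Ht _]]]]; apply/flattenP; exists (nth [::] T j).
  exact: mem_nth.
by rewrite Ht mem_cat inE eqxx orbT.
Qed.

Lemma holes_lt T h c a ws k y : holes_ok T h -> input c a T ws k y -> k < h.
Proof. by move=> [_ H] /input_mem /H. Qed.

Lemma holes_in T h k : holes_ok T h -> k < h -> inr k \in flatten T.
Proof. by move=> [H _] /H Hc; rewrite -has_pred1 has_count Hc. Qed.

Lemma hole_input c a T ws h k : valid c a (fill T ws) -> holes_ok T h -> k < h ->
  exists y, input c a T ws k y /\ forall y', input c a T ws k y' -> y' = y.
Proof.
move=> Hv Hh Hk; have [y Hy] := input_ex Hv (holes_in Hh Hk).
exists y; split => // y' Hy'; apply: (input_uniq (k := k)) Hy' Hy.
by case: Hh => H _; apply: H.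
Qed.

Lemma fresh_inl T l x : fresh T l -> inl x \in flatten T -> lid x \notin l.
Proof.
move=> [_ /allP H] Hx; apply/negP => Hin; have := H _ Hin; rewrite /erase.
by rewrite /ids (map_f lid (mem_fill_inl [::] Hx)).
Qed.

Lemma nth_nil_ws k : nth [::] [:: [::] : seq letter] k = [::].
Proof. by case: k => [|[]]. Qed.
Lemma nth_nil_ws2 k : nth [::] [:: [::] : seq letter; [::]] k = [::].
Proof. by case: k => [|[|[]]]. Qed.

Lemma r1_sem c i o s y y' : run c [:: (i, o, s); (i, ~~ o, s)] y = Some y' ->
  c i = y /\ y' = y.
Proof.
case: o => /=; rewrite /lid /lover /lsgn /=.
  by case: eqP => // -> [<-]; rewrite opI.
case: eqP => // E [<-].
have Hy : y = c i by rewrite -(opK s y (c i)) E opI.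
by rewrite E Hy.
Qed.

Lemma R1_P D D' : R1_move D D' -> (PP D -> PP D') /\ (PP D' -> PP D).
Proof.
move=> [T [i [o [s [Hh [Hf [-> ->]]]]]]]; split.
- move=> [c [a [Hv Hnt]]].
  have [y0 [Hy0 Hu]] := hole_input Hv Hh (ltn0Sn 0).
  apply: (fill_P opI (c2 := fun j => if j == i then y0 else c j) Hv Hnt).
  + move=> l Hl; have := fresh_inl Hf Hl; rewrite inE; by case: eqP.
  + move=> k y Hi; have := holes_lt Hh Hi; case: k Hi => // Hi _.
    rewrite (Hu _ Hi) /=; rewrite /lid /lover /lsgn /= eqxx.
    by case: o => /=; rewrite ?opI ?eqxx ?opI.
  + by move=> z _ k l _; rewrite nth_nil_ws.
- move=> [c [a [Hv Hnt]]].
  have [y0 [Hy0 Hu]] := hole_input Hv Hh (ltn0Sn 0).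
  have [y1 Hy1] := input_some Hv Hy0.
  have [Ec _] := r1_sem Hy1.
  apply: (fill_P opI (c2 := c) Hv Hnt) => //.
  + move=> k y Hi; have := holes_lt Hh Hi; case: k Hi => // Hi _.
    rewrite (Hu _ Hi) Hy1 /=; by case: (r1_sem Hy1) => _ ->.
  + move=> z Hz k l Hk; have := holes_lt (y := y0) Hh.
    rewrite (Hz _ _ Hy0) in Ec.
    case: k Hk => [|k] Hk /=; last by rewrite nth_nil.
    by rewrite !inE => _ /orP [] /eqP -> /=.
Qed.

Lemma opK' s x y : op s (op (~~ s) x y) y = x.
Proof. by rewrite -{1}(negbK s) opK. Qed.

Lemma r2_over c i j s s' y y' : run c [:: (i, true, s); (j, true, s')] y = Some y' ->
  [/\ c i = y, c j = y & y' = y].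
Proof. rewrite /= /lid /=; by case: eqP => // ->; case: eqP => // -> [->]. Qed.

Lemma r2_under c i j s (rv : bool) y : c i = c j ->
  run c (if rv then [:: (j, false, ~~ s); (i, false, s)]
         else [:: (i, false, s); (j, false, ~~ s)]) y = Some y.
Proof. by move=> E; case: rv; rewrite /= /lid /lsgn /= E ?opK ?opK'. Qed.

Lemma R2_P D D' : R2_move D D' -> (PP D -> PP D') /\ (PP D' -> PP D).
Proof.
move=> [T [i [j [s [rv [Hh [Hf [-> ->]]]]]]]]; split.
- move=> [c [a [Hv Hnt]]].
  have [y0 [Hy0 Hu]] := hole_input Hv Hh (ltn0Sn 1).
  apply: (fill_P opI (c2 := fun j' => if j' \in [:: i; j] then y0 else c j') Hv Hnt).
  + move=> l Hl; have := fresh_inl Hf Hl; by case: ifP.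
  + move=> k y Hi; have := holes_lt Hh Hi; case: k Hi => [|[|]] // Hi _.
      by rewrite (Hu _ Hi) /= /lid /= !inE !eqxx ?orbT /= eqxx.
    rewrite nth_nil_ws2 /= r2_under //.
    by rewrite !inE !eqxx ?orbT.
  + by move=> z _ k l _; rewrite nth_nil_ws2.
- move=> [c [a [Hv Hnt]]].
  have [y0 [Hy0 Hu]] := hole_input Hv Hh (ltn0Sn 1).
  have [y1 Hy1] := input_some Hv Hy0.
  have [Eci Ecj _] := r2_over Hy1.
  apply: (fill_P opI (c2 := c) Hv Hnt) => //.
  + move=> k y Hi; have := holes_lt Hh Hi; case: k Hi => [|[|]] // Hi _.
      by rewrite (Hu _ Hi) Hy1 /=; case: (r2_over Hy1) => _ _ ->.
    by rewrite nth_nil_ws2 /= r2_under // Eci Ecj.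
  + move=> z Hz k l Hk; rewrite (Hz _ _ Hy0) in Eci Ecj.
    case: k Hk => [|[|k]] Hk /=; last by rewrite nth_nil.
      by rewrite !inE => /orP [] /eqP -> /=.
    by case: (rv); rewrite !inE => /orP [] /eqP -> /=.
Qed.

Lemma over2_sem c t i j s s' y y' :
  run c (ord2 t (i, true, s) (j, true, s')) y = Some y' ->
  [/\ c i = y, c j = y & y' = y].
Proof.
case: t => /=; rewrite /lid /=; case: eqP => // ->; case: eqP => // -> [->] //.
Qed.

Lemma over2_eq c t i j s s' y : c i = y -> c j = y ->
  run c (ord2 t (i, true, s) (j, true, s')) y = Some y.
Proof. by move=> Ei Ej; case: t; rewrite /= /lid /= Ei Ej eqxx. Qed.

Lemma mid_sem c m i k si sk y y' :
  run c (ord2 m (i, false, si) (k, true, sk)) y = Some y' ->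
  c k = (if m then op si y (c i) else y) /\ y' = op si y (c i).
Proof.
case: m => /=; rewrite /lid /lsgn /=; case: eqP => // -> [<-] //.
Qed.

Lemma R3_dir T i j k si sj sk t m b : holes_ok T 3 -> fresh T [:: i; j; k] ->
  (si == sj) = (m == b) ->
  PP (fill T (r3_words i j k si sj sk t m b)) ->
  PP (fill T (r3_words i j k si sj sk (~~ t) (~~ m) (~~ b))).
Proof.
move=> Hh Hf Hcond [c [a [Hv Hnt]]].
have Hu3 : uniq [:: i; j; k] by case: Hf.
move: (Hu3); rewrite /= !inE !negb_or => /andP [/andP [Hij Hik] /andP [Hjk _]].
have [xt [Ht Hut]] := hole_input Hv Hh (isT : 0 < 3).
have [xm [Hm Hum]] := hole_input Hv Hh (isT : 1 < 3).
have [xb [Hb Hub]] := hole_input Hv Hh (isT : 2 < 3).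
have [yt Hyt] := input_some Hv Ht.
have [ym Hym] := input_some Hv Hm.
have [Eci Ecj Eyt] := over2_sem Hyt.
have [Eck Eym] := mid_sem Hym.
rewrite Eci in Eck Eym.
pose nk := if ~~ m then op si xm xt else xm.
apply: (fill_P opI (c2 := fun x => if x == k then nk else c x) Hv Hnt).
- move=> l Hl; have := fresh_inl Hf Hl; rewrite !inE !negb_or => /andP [_ /andP [_ H]].
  by rewrite (negbTE H).
- move=> h y Hi; have := holes_lt Hh Hi; case: h Hi => [|[|[|]]] // Hi _.
  + rewrite (Hut _ Hi) Hyt Eyt /= over2_eq //.
      by rewrite (negbTE Hik).
    by rewrite (negbTE Hjk).
  + rewrite (Hum _ Hi) Hym Eym /=.
    rewrite /nk; case: (m) Eck => Eck /=; rewrite /lid /lsgn /= ?eqxx ?(negbTE Hik) ?Eci ?eqxx //=.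
  + rewrite /nk.
    case: (m) (b) Hcond Eck => [] [] /= Hc Eck; rewrite /lid /lsgn /= eqxx (negbTE Hjk) Ecj Eck.
    * by case: (si) (sj) Hc => [] [] // _; congr Some; rewrite [RHS]opD.
    * by case: (si) (sj) Hc => [] [] // _; congr Some; rewrite [LHS]opD ?opK ?opK'.
    * by case: (si) (sj) Hc => [] [] // _; congr Some; rewrite [RHS]opD ?opK ?opK'.
    * by case: (si) (sj) Hc => [] [] // _; congr Some; rewrite [LHS]opD.
- move=> z Hz h l Hk; rewrite (Hz _ _ Ht) in Eci Ecj.
  rewrite (Hz _ _ Hm) (Hz _ _ Ht) in Eck.
  case: h Hk => [|[|[|h]]] Hk /=; last by rewrite nth_nil.
  + by case: (t); rewrite !inE => /orP [] /eqP -> /=.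
  + by case: (m) Eck; rewrite ?opI => Eck; rewrite !inE => /orP [] /eqP -> /=.
  + by case: (m) Eck; rewrite ?opI => Eck; case: (b); rewrite !inE => /orP [] /eqP -> /=.
Qed.

Lemma R3_P D D' : R3_move D D' -> (PP D -> PP D') /\ (PP D' -> PP D).
Proof.
move=> [T [i [j [k [si [sj [sk [t [m [b [Hh [Hf [Hc1 [Hc2 [-> ->]]]]]]]]]]]]]]]; split.
  exact: R3_dir.
move=> H; rewrite -[t]negbK -[m]negbK -[b]negbK; apply: R3_dir => //.
by rewrite Hc1; case: (m); case: (b).
Qed.

Lemma OC_dir T x y : holes_ok T 1 -> lover x -> lover y ->
  PP (fill T [:: [:: x; y]]) -> PP (fill T [:: [:: y; x]]).
Proof.
move=> Hh Hx Hy [c [a [Hv Hnt]]].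
have [y0 [Hy0 Hu]] := hole_input Hv Hh (ltn0Sn 0).
have [y1 Hy1] := input_some Hv Hy0.
move: Hy1 => /=; rewrite Hx Hy; case: eqP => // Ex; case: eqP => // Ey _.
apply: (fill_P opI (c2 := c) Hv Hnt) => //.
- move=> k y' Hi; have := holes_lt Hh Hi; case: k Hi => // Hi _.
  by rewrite (Hu _ Hi) /= Hx Hy -Ex -Ey eqxx.
- move=> z Hz k l Hk; have := holes_lt (y := y0) Hh; rewrite (Hz _ _ Hy0) in Ex Ey.
  case: k Hk => [|k] Hk /=; last by rewrite nth_nil.
  by rewrite !inE => _ /orP [] /eqP ->.
Qed.

Lemma OC_P D D' : OC_move D D' -> (PP D -> PP D') /\ (PP D' -> PP D).
Proof.
move=> [T [x [y [Hh [Hx [Hy [_ [-> ->]]]]]]]]; split; exact: OC_dir.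
Qed.

Lemma run_overs c s l y :
  run c [seq (i, true, s) | i <- l] y = if all (fun i => c i == y) l then Some y else None.
Proof.
elim: l => //= i l IH; rewrite /lid /= IH eq_sym.
by case: (c i == y).
Qed.

Lemma run_unders c s l y y0 : (forall i, i \in l -> c i = y0) ->
  run c [seq (i, false, s) | i <- l] y = Some (iter (size l) (fun w => op s w y0) y).
Proof.
elim: l y => //= i l IH y H; rewrite /lid /lsgn /= H ?inE ?eqxx // IH.
  by rewrite -[op s y y0]/((op s)^~ y0 y) -iterSr.
by move=> i' Hi'; apply: H; rewrite inE Hi' orbT.
Qed.

Variable n : nat.
Hypothesis opN : forall s x y, iter n (fun w => op s w y) x = x.

Lemma Vn_P D D' : Vn_move n D D' -> (PP D -> PP D') /\ (PP D' -> PP D).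
Proof.
move=> [T [s [l [Hh [Hs [Hf [-> ->]]]]]]]; split.
- move=> [c [a [Hv Hnt]]].
  have [y0 [Hy0 Hu]] := hole_input Hv Hh (ltn0Sn 1).
  apply: (fill_P opI (c2 := fun j' => if j' \in l then y0 else c j') Hv Hnt).
  + move=> l' Hl; have := fresh_inl Hf Hl; by case: ifP.
  + move=> k y Hi; have := holes_lt Hh Hi; case: k Hi => [|[|]] // Hi _.
      rewrite (Hu _ Hi) /= run_overs; case: allP => // [[i Hi']].
      by rewrite Hi' eqxx.
    rewrite nth_nil_ws2 /= (@run_unders _ _ _ _ y0) ?Hs ?opN //.
    by move=> i ->.
  + by move=> z _ k l' _; rewrite nth_nil_ws2.
- move=> [c [a [Hv Hnt]]].
  have [y0 [Hy0 Hu]] := hole_input Hv Hh (ltn0Sn 1).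
  have [y1 Hy1] := input_some Hv Hy0.
  move: Hy1; rewrite /= run_overs; case: allP => // Hall _.
  have Hall' : forall i, i \in l -> c i = y0 by move=> i /Hall /eqP.
  apply: (fill_P opI (c2 := c) Hv Hnt) => //.
  + move=> k y Hi; have := holes_lt Hh Hi; case: k Hi => [|[|]] // Hi _.
      by rewrite (Hu _ Hi) /= run_overs; case: allP.
    by rewrite nth_nil_ws2 /= (run_unders _ _ Hall') Hs opN.
  + move=> z Hz k l' Hk; rewrite (Hz _ _ Hy0) in Hall'.
    case: k Hk => [|[|k]] Hk /=; last by rewrite nth_nil.
      by move/mapP => [i Hi ->]; apply: Hall'.
    by move/mapP => [i Hi ->]; apply: Hall'.
Qed.


Lemma nth_mid (D1 D2 : gdiag) w w' q : q != size D1 ->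
  nth [::] (D1 ++ w :: D2) q = nth [::] (D1 ++ w' :: D2) q.
Proof.
move=> Hq; rewrite !nth_cat; case: ltnP => // H.
by case E: (q - size D1) => [|q'] //; move: Hq; rewrite eqn_leq H andbT -subn_eq0 E.
Qed.

Lemma mem_flatten_rot (D1 D2 : gdiag) w r l :
  (l \in flatten (D1 ++ rot r w :: D2)) = (l \in flatten (D1 ++ w :: D2)).
Proof.
have E : forall s : seq letter, flatten (s :: D2) = s ++ flatten D2 by [].
rewrite !flatten_cat !E !mem_cat; congr (_ || (_ || _)).
by rewrite orbC -mem_cat cat_take_drop.
Qed.

Lemma rot_dir D1 D2 w r : PP (D1 ++ w :: D2) -> PP (D1 ++ rot r w :: D2).
Proof.
move=> [c [a [Hv Hnt]]].
set p := size D1.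
have Hp : p < size (D1 ++ w :: D2) by rewrite size_cat /= addnS ltnS leq_addr.
have Hnp : nth [::] (D1 ++ w :: D2) p = w by rewrite nth_cat ltnn subnn.
have Hnp' : nth [::] (D1 ++ rot r w :: D2) p = rot r w by rewrite nth_cat ltnn subnn.
have Hw := Hv p Hp; rewrite Hnp -{1}(cat_take_drop r w) run_cat in Hw.
case Ey: (run c (take r w) (a p)) Hw => [y|] //= Hd.
have Hsz : size (D1 ++ rot r w :: D2) = size (D1 ++ w :: D2) by rewrite !size_cat.
exists c, (fun q => if q == p then y else a q); split.
  move=> q; rewrite Hsz => Hq.
  case: eqP => [->|/eqP Hqp].
    by rewrite Hnp' /rot run_cat Hd /= Ey.
  by rewrite (nth_mid _ _ w) //; apply: Hv.
move=> [z [Ha Hc]]; apply: Hnt; exists z; split.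
  move=> q Hq; have := Ha q; rewrite Hsz => /(_ Hq).
  case: eqP => [-> Hy|] //.
  move: Hd; rewrite Hy run_const //; first by case.
  move=> l Hl; apply: Hc; apply/mapP; exists l => //.
  by rewrite mem_flatten_rot flatten_cat /= !mem_cat -{1}(cat_take_drop r w) mem_cat Hl !orbT.
move=> i /mapP [l Hl ->]; apply: Hc; apply/mapP; exists l => //.
by rewrite mem_flatten_rot.
Qed.

Lemma rot_P D D' : rot_move D D' -> (PP D -> PP D') /\ (PP D' -> PP D).
Proof.
move=> [D1 [D2 [w [r [-> ->]]]]]; split; first exact: rot_dir.
move=> H; have := rot_dir (size (rot r w) - r) H.
by rewrite -/(rotr r (rot r w)) rotK.
Qed.

Definition relab (f : nat -> nat) (x : letter) : letter := (f (lid x), lover x, lsgn x).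

Lemma run_map c f w x : run c (map (relab f) w) x = run (fun i => c (f i)) w x.
Proof.
elim: w x => [|l w IH] x //=.
by rewrite /relab /lid /lover /lsgn /=; case: (l.1.2); rewrite IH.
Qed.

Lemma ids_relab f D : ids (map (map (relab f)) D) = map f (ids D).
Proof. by rewrite /ids -map_flatten -!map_comp. Qed.

Lemma relabel_P D D' : relabel_move D D' -> (PP D -> PP D') /\ (PP D' -> PP D).
Proof.
move=> [f [Hf ->]]; rewrite -/(map (map (relab f)) D); split.
- move=> [c [a [Hv Hnt]]].
  pose c' y := if [seq i <- ids D | f i == y] is i :: _ then c i else c 0.
  have Hc' : forall i, i \in ids D -> c' (f i) = c i.
    move=> i Hi; rewrite /c'.
    have Hin : i \in [seq i' <- ids D | f i' == f i] by rewrite mem_filter eqxx.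
    have Hall : forall i', i' \in [seq i' <- ids D | f i' == f i] -> i' = i.
      by move=> i'; rewrite mem_filter => /andP [/eqP /Hf].
    move: Hin Hall; case: [seq _ <- _ | _] => [|i' s] //= _ H.
    by rewrite (H i') // inE eqxx.
  exists c', a; split.
    move=> k; rewrite size_map => Hk; rewrite (nth_map [::]) // run_map.
    rewrite -(Hv k Hk); apply: run_ext => l Hl; apply: Hc'.
    apply/mapP; exists l => //; apply/flattenP; exists (nth [::] D k) => //.
    exact: mem_nth.
  move=> [z [Ha Hc]]; apply: Hnt; exists z; split.
    by move=> k Hk; apply: Ha; rewrite size_map.
  move=> i Hi; rewrite -Hc' // Hc // ids_relab map_f //.
- move=> [c [a [Hv Hnt]]].
  exists (fun i => c (f i)), a; split.
    move=> k Hk; have := Hv k; rewrite size_map (nth_map [::]) // run_map.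
    by move=> /(_ Hk).
  move=> [z [Ha Hc]]; apply: Hnt; exists z; split.
    by move=> k Hk; apply: Ha; rewrite -(size_map (map (relab f))).
  by move=> i; rewrite ids_relab => /mapP [i' Hi' ->]; apply: Hc.
Qed.

Lemma step_P D D' : wVn_step n D D' -> (PP D <-> PP D').
Proof.
move=> [_ [_ H]].
have [H1 H2] : (PP D -> PP D') /\ (PP D' -> PP D).
  case: H => [H|[H|[H|[H|[H|[H|H]]]]]].
  - exact: (rot_P H).
  - exact: (relabel_P H).
  - exact: (R1_P H).
  - exact: (R2_P H).
  - exact: (R3_P H).
  - exact: (OC_P H).
  - exact: (Vn_P H).
by split.
Qed.

Lemma clos_P D D' : clos_refl_sym_trans gdiag (wVn_step n) D D' -> (PP D <-> PP D').
Proof.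
elim=> [x y /step_P|x|x y _ [H1 H2]|x y z _ [H1 H2] _ [H3 H4]] //; tauto.
Qed.

End Moves.


Lemma wf_filter D i : gauss_wf D -> gauss_wf (map (filter (fun l => lid l != i)) D).
Proof.
move=> H j; rewrite /ids -filter_flatten => /mapP [l]; rewrite mem_filter => /andP [Hli Hl] Ej.
have Hj : j \in ids D by apply/mapP; exists l.
have [H1 [H2 H3]] := H j Hj.
have Hji : j != i by rewrite Ej.
split; [|split].
- rewrite count_filter -H1; apply: eq_count => x /=.
  by case: eqP => //= ->; rewrite Hji andbT.
- rewrite count_filter -H2; apply: eq_count => x /=.
  by case: eqP => //= ->; rewrite Hji andbT.
- move=> x y; rewrite !mem_filter => /andP [_ Hx] /andP [_ Hy]; exact: H3.
Qed.

Lemma count_flatten_map (A B : Type) (a : pred B) (g : A -> seq B) s :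
  count a (flatten (map g s)) = sumn (map (fun e => count a (g e)) s).
Proof. by rewrite count_flatten -map_comp. Qed.

Lemma leq_sumn_map (A : eqType) (F G : A -> nat) s :
  (forall e, e \in s -> G e <= F e) -> sumn (map G s) <= sumn (map F s).
Proof.
elim: s => //= e s IH H; apply: leq_add; first by apply: H; rewrite inE eqxx.
by apply: IH => e' He'; apply: H; rewrite inE He' orbT.
Qed.

Lemma eq_sumn_map (A : eqType) (F G : A -> nat) s :
  (forall e, e \in s -> G e = F e) -> sumn (map G s) = sumn (map F s).
Proof. by move=> H; congr sumn; apply/eq_in_map. Qed.

Lemma sumn_map_ge2 (A : eqType) (F : A -> nat) s e1 e2 :
  e1 \in s -> e2 \in s -> e1 != e2 -> F e1 + F e2 <= sumn (map F s).
Proof.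
elim: s => //= e s IH; rewrite !inE.
have Hle : forall e', e' \in s -> F e' <= sumn (map F s).
  move=> e' He'; rewrite -(nth_index e' He') -(nth_map e' 0) ?index_mem //.
  exact: nth_le_sumn.
case/orP => [/eqP ->|H1]; case/orP => [/eqP ->|H2] Hne.
- by rewrite eqxx in Hne.
- by rewrite leq_add2l Hle.
- by rewrite addnC leq_add2l Hle.
- by apply: leq_trans (IH H1 H2 Hne) _; exact: leq_addl.
Qed.

Definition tsub (g : tentry -> seq tentry) (T : template) : template :=
  map (fun t => flatten (map g t)) T.

Lemma fillc_flatten ws (L : seq (seq tentry)) : fillc ws (flatten L) = flatten (map (fillc ws) L).
Proof. by elim: L => //= t L IH; rewrite fillc_cat IH. Qed.

Lemma fill_tsub g T ws ws' :
  (forall e, e \in flatten T -> fillc ws' (g e) = ent ws e) ->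
  fill (tsub g T) ws' = fill T ws.
Proof.
move=> H; rewrite !fillE /tsub -map_comp; apply/eq_in_map => t Ht /=.
rewrite fillc_flatten -map_comp /fillc; congr flatten; apply/eq_in_map => e He /=.
by rewrite -/(fillc ws' (g e)) H //; apply/flattenP; exists t.
Qed.

Lemma fill_tsubF g T ws' F :
  (forall e, e \in flatten T -> fillc ws' (g e) = F e) ->
  fill (tsub g T) ws' = map (fun t => flatten (map F t)) T.
Proof.
move=> H; rewrite !fillE /tsub -map_comp; apply/eq_in_map => t Ht /=.
rewrite fillc_flatten -map_comp; congr flatten; apply/eq_in_map => e He /=.
by rewrite H //; apply/flattenP; exists t.
Qed.

Lemma filter_fill T ws q :
  map (filter q) (fill T ws) = map (fun t => flatten (map (fun e => filter q (ent ws e)) t)) T.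
Proof.
rewrite fillE -map_comp; apply/eq_in_map => t _ /=.
by rewrite /fillc filter_flatten -map_comp.
Qed.

Lemma flatten_tsub g T : flatten (tsub g T) = flatten (map g (flatten T)).
Proof. by elim: T => //= t T IH; rewrite IH map_cat flatten_cat. Qed.

Lemma flatten_fill' T ws : flatten (fill T ws) = flatten (map (ent ws) (flatten T)).
Proof. exact: flatten_fill. Qed.

Lemma letterE (w : letter) : w = (lid w, lover w, lsgn w).
Proof. by case: w => [[]]. Qed.

Lemma UC_realized1 : UC_realized_by_wVn 1.
Proof.
move=> D D' [wfD [wfD' [T [x [y [[Hh1 Hh2] [Hx [Hy [Hxy [ED ED']]]]]]]]]].
case: x Hx Hxy ED ED' => [[i o] s] /= Ho Hxy ED ED'.
move: Ho Hxy ED ED'; case: o => // _ Hxy ED ED'.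
rewrite /lid /= in Hxy.
set x := (i, false, s) in ED ED'.
set zz : letter := (i, true, s).
set ws := [:: [:: x; y]].
have Hholes : forall k, inr k \in flatten T -> k = 0 by move=> k /Hh2; case: k.
have H0T : inr 0 \in flatten T by rewrite -has_pred1 has_count Hh1.
have HxD : x \in flatten D.
  by rewrite ED; apply: (mem_fill_hole H0T); rewrite /= inE eqxx.
have HiD : i \in ids D by apply/mapP; exists x.
have [Cov [Cun Csg]] := wfD i HiD.
have HcntD : forall a, count a (flatten D) = sumn (map (fun e => count a (ent ws e)) (flatten T)).
  by move=> a; rewrite ED flatten_fill count_flatten_map.
have F4 : forall w, inl w \in flatten T -> lid w = i -> w = zz.
  move=> w Hw Hwi.
  have HwD : w \in flatten D by rewrite ED; exact: mem_fill_inl.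
  case Hwo: (lover w).
    have Hs : lsgn w = s by apply: (Csg w x).
    by rewrite (letterE w) Hwi Hwo Hs.
  have := sumn_map_ge2 (fun e => count (fun x0 => (lid x0 == i) && ~~ lover x0) (ent ws e)) Hw H0T isT.
  by rewrite -HcntD Cun /= Hwi Hwo eqxx /= add1n addn0 addSn.
have F5 : count (pred1 (inl zz)) (flatten T) = 1.
  apply/eqP; rewrite eqn_leq; apply/andP; split.
    rewrite -Cov HcntD -sumn_count; apply: leq_sumn_map => e _.
    by rewrite /=; case: (@eqP _ e (inl zz)) => //= ->; rewrite /zz /lid /lover /= eqxx.
  rewrite -has_count has_pred1.
  have [w Hw [Hwi Hwo]] : exists2 w, w \in flatten D & lid w = i /\ lover w.
    have : has (fun x0 => (lid x0 == i) && lover x0) (flatten D) by rewrite has_count Cov.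
    by case/hasP => w Hw /andP [/eqP ? ?]; exists w.
  have Hws : lsgn w = s by apply: (Csg w x).
  have Ew : w = zz by rewrite (letterE w) Hwi Hwo Hws.
  rewrite Ew ED in Hw; case: (mem_fill Hw) => // [[k Hk]].
  rewrite (Hholes k Hk) /= !inE => /orP [] /eqP E.
    by move: E; rewrite /zz /x => [[]].
  by move: Hy; rewrite -E.
pose gb := fun (b : bool) (e : tentry) => match e with
  | inl w => if w == zz then [:: inr 0] else [:: inl w]
  | inr _ => if b then [:: inr 1; inl y] else [:: inl y; inr 1] end : seq tentry.
set g1 := gb true.
set g2 := gb false.
set F := fun e : tentry => match e with
  | inl w => if w == zz then [::] else [:: w]
  | inr _ => [:: y] end.
have EF1 : fill (tsub g1 T) [:: [::]; [::]] = map (fun t => flatten (map F t)) T.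
  by apply: fill_tsubF => [[w|k]] //=; case: (w == zz).
have EF2 : fill (tsub g2 T) [:: [::]; [::]] = map (fun t => flatten (map F t)) T.
  by apply: fill_tsubF => [[w|k]] //=; case: (w == zz).
have EFD : map (filter (fun l => lid l != i)) D = map (fun t => flatten (map F t)) T.
  rewrite ED filter_fill; apply/eq_in_map => t Ht /=; congr flatten.
  apply/eq_in_map => e He /=.
  have HeT : e \in flatten T by apply/flattenP; exists t.
  case: e He HeT => [w|k] _ HeT /=.
    case: (@eqP _ w zz) => [->|Hne]; first by rewrite /zz /lid /= eqxx.
    case: ifP => // /negbFE /eqP Hwi.
    by case: Hne; apply: F4.
  by rewrite (Hholes k HeT) /= /x /lid /= eqxx /=; move: Hxy; rewrite eq_sym => ->.
have wfD1 : gauss_wf (map (fun t => flatten (map F t)) T) by rewrite -EFD; apply: wf_filter.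
have Hyi : lid y != i by rewrite eq_sym.
have Hgb : forall b, [/\ holes_ok (tsub (gb b) T) 2, fresh (tsub (gb b) T) [:: i] &
    fill (tsub (gb b) T) [:: [:: zz]; [:: x]] = fill T (if b then [:: [:: x; y]] else [:: [:: y; x]])].
  move=> b; split.
  - split.
      move=> [|[|h]] // _; rewrite flatten_tsub count_flatten_map.
        transitivity (count (pred1 (inl zz : tentry)) (flatten T)); last exact: F5.
        rewrite -sumn_count; congr sumn; apply/eq_in_map => e He /=.
        case: e He => [w|k] He; rewrite /gb /=; last by case: (b).
        case: ifP => [/eqP ->|Hne] /=; first by rewrite eqxx.
        case: eqP => // [[Ew]]; by move: Hne; rewrite Ew eqxx.
      transitivity (count (pred1 (inr 0 : tentry)) (flatten T)); last exact: Hh1.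
      rewrite -sumn_count; congr sumn; apply/eq_in_map => e He /=.
      case: e He => [w|k] He; rewrite /gb /=; first by case: (w == zz).
      by rewrite (Hholes k He) eqxx; case: (b).
    move=> h; rewrite flatten_tsub => /flatten_mapP [[w|k] He] /=.
      by case: (w == zz); rewrite !inE //= => /eqP [<-].
    by case: (b); rewrite !inE => /orP [] /eqP // [<-].
  - split => //=; rewrite andbT; apply/negP => /mapP [l Hl /esym Eli].
    case: (mem_fill Hl) => [|[k _]]; last by rewrite nth_nil.
    rewrite flatten_tsub => /flatten_mapP [[w|k] He] /=.
      case: (@eqP _ w zz) => [_|Hne]; first by rewrite inE.
      rewrite inE => /eqP [Ew]; apply: Hne; apply: F4 => //; by rewrite -Ew.
    by case: (b); rewrite !inE => /orP [] /eqP // [El]; move: Hyi; rewrite -El Eli eqxx.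
  - apply: fill_tsub => [[w|k]] He /=.
      by case: (@eqP _ w zz) => [->|].
    by rewrite (Hholes k He); case: (b).
have [Hh1' Hf1 Ef1] := Hgb true.
have [Hh2' Hf2 Ef2] := Hgb false.
set D1 := map (fun t => flatten (map F t)) T in EF1 EF2 EFD wfD1.
have S1 : wVn_step 1 D1 D.
  split => //; split => //; do 6 right.
  exists (tsub g1 T), s, [:: i]; split => //; split => //; split => //.
  by rewrite ED -Ef1.
have S2 : wVn_step 1 D1 D'.
  split => //; split => //; do 6 right.
  exists (tsub g2 T), s, [:: i]; split => //; split => //; split => //.
  by rewrite ED' -Ef2.
apply: (rst_trans _ _ _ D1); first by apply: rst_sym; apply: rst_step.
exact: rst_step.
Qed.

Import GRing.Theory.


Section Alex.
Local Open Scope ring_scope.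
Variable R : comNzRingType.
Variables t t' : R.
Hypothesis tt' : t * t' = 1.

Definition tau (s : bool) : R := if s then t else t'.
Definition aop (s : bool) (x y : R) : R := tau s * x + (1 - tau s) * y.

Lemma tauK s : tau (~~ s) * tau s = 1.
Proof. by case: s => /=; rewrite ?tt' // mulrC. Qed.

Lemma aopI s x : aop s x x = x.
Proof. rewrite /aop; ring. Qed.

Lemma aopK s x y : aop (~~ s) (aop s x y) y = x.
Proof.
rewrite /aop.
have -> : tau (~~ s) * (tau s * x + (1 - tau s) * y) + (1 - tau (~~ s)) * y =
  (tau (~~ s) * tau s) * x + (1 - tau (~~ s) * tau s) * y by ring.
rewrite tauK; ring.
Qed.

Lemma aopD d e a z y : aop e (aop d a z) y = aop d (aop e a y) (aop e z y).
Proof. rewrite /aop; ring. Qed.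

Lemma aop_iter s k x y : iter k (fun w => aop s w y) x = tau s ^+ k * x + (1 - tau s ^+ k) * y.
Proof.
elim: k => [|k IH] /=; first by rewrite expr0; ring.
rewrite IH /aop exprS; ring.
Qed.

Variable n : nat.
Hypothesis tn : t ^+ n = 1.

Lemma aopN s x y : iter n (fun w => aop s w y) x = x.
Proof.
have Hn : tau s ^+ n = 1.
  case: s => //=.
  by rewrite -(mul1r (t' ^+ n)) -tn -exprMn tt' expr1n.
by rewrite aop_iter Hn; ring.
Qed.

End Alex.


Definition cA : seq letter := [:: (0,true,true); (1,false,true); (2,false,true); (3,false,false); (4,false,false)].
Definition cA' : seq letter := [:: (0,true,true); (1,false,true); (3,false,false); (2,false,true); (4,false,false)].
Definition cB : seq letter := [:: (1,true,true); (3,true,false); (0,false,true)].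
Definition cC : seq letter := [:: (2,true,true); (4,true,false)].
Definition Dce : gdiag := [:: cA; cB; cC].
Definition Dce' : gdiag := [:: cA'; cB; cC].

Section CE.
Local Open Scope ring_scope.
Variable R : comNzRingType.
Variable h : R.
Hypothesis Hh : 2 * h = 1.

Notation op := (aop 2 h).

Lemma ce_PP' : PP op Dce'.
Proof.
exists (fun i => if i \in [:: 2; 4]%N then 1 else 0), (fun k => if k == 2%N then 1 else 0).
split.
  move=> [|[|[|k]]] // _; rewrite /= /lid /lover /lsgn /= ?eqxx ?aopI //.
  by rewrite -[false]/(~~ true) aopK.
move=> [z [Ha _]]; have H0 := Ha 0%N isT; have H2 := Ha 2%N isT.
move: H0 H2 => /= H0 H2.
have : (1 : R) = 0 by rewrite H2 -H0.
by move/eqP; rewrite oner_eq0.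
Qed.

Lemma ce_notPP : ~ PP op Dce.
Proof.
move=> [c [a [Hv Hnt]]]; apply: Hnt.
have HA := Hv 0%N isT; have HB := Hv 1%N isT; have HC := Hv 2%N isT.
move: HA HB HC; rewrite /= /lid /lover /lsgn /=.
case: eqP => // E0 HA; case: eqP => // E1; case: eqP => // E3 HB.
case: eqP => // E2; case: eqP => // E4 _.
case: HB => HB; move: HA.
have Ec0 : c 0%N = a 1%N.
  apply/eqP; rewrite -subr_eq0.
  have -> : c 0%N - a 1%N = a 1%N - op true (a 1%N) (c 0%N) by rewrite /aop /tau; ring.
  by rewrite HB subrr.
move=> HA; case: HA; rewrite E0 Ec0 -E1 -E3 -E2 -E4 aopI.
set u := a 1%N; set v := a 2%N => HA.
have Hvu : v = u.
  apply/eqP; rewrite -subr_eq0.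
  have -> : v - u = 4 * (op false (op false (op true u v) u) v - u)
     + (2 * h - 1) * ((2 * h + 3) * (v - u)) by rewrite /aop /tau; ring.
  by rewrite HA Hh !subrr mulr0 mul0r addr0.
exists u; split.
  by move=> [|[|[|k]]] // _; rewrite /= ?E0 ?Ec0 // Hvu.
move=> i; rewrite /ids /= !inE.
by do ![move=> /orP []] => /eqP ->; rewrite ?Ec0 -?E1 -?E2 -?E3 -?E4 // Hvu.
Qed.

End CE.


Definition wfb (D : gdiag) : bool :=
  all (fun i => [&& count (fun x => (lid x == i) && lover x) (flatten D) == 1,
     count (fun x => (lid x == i) && ~~ lover x) (flatten D) == 1 &
     all (fun x => all (fun y => (lid x == i) ==> (lid y == i) ==> (lsgn x == lsgn y))
        (flatten D)) (flatten D)]) (ids D).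

Lemma wfbP D : wfb D -> gauss_wf D.
Proof.
move/allP => H i Hi; case/and3P: (H i Hi) => /eqP H1 /eqP H2 /allP H3.
split => //; split => // x y Hx Hy Ex Ey; have := allP (H3 x Hx) y Hy.
by rewrite Ex Ey eqxx => /eqP.
Qed.

Definition Tce : template :=
  [:: [:: inl (0,true,true); inl (1,false,true); inr 0; inl (4,false,false)];
      map inl cB; map inl cC].

Lemma ce_UC : UC_step Dce Dce'.
Proof.
split; first by apply: wfbP.
split; first by apply: wfbP.
exists Tce, (2,false,true), (3,false,false); split.
  split; first by move=> [|h] //.
  by move=> [|h].
by [].
Qed.

Section N2.
Local Open Scope ring_scope.
Lemma two_pow_Zp n : (1 < n)%N -> (2 : 'Z_((2 ^ n).-1)) ^+ n = 1.
Proof.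
move=> Hn.
have Hp : (1 < (2 ^ n).-1)%N.
  have : (2 ^ 2 <= 2 ^ n)%N by rewrite leq_exp2l.
  by case: (2 ^ n)%N => [|[|[|]]].
have -> : (2 : 'Z_((2 ^ n).-1)) ^+ n = ((2 ^ n)%N)%:R by rewrite natrX.
have -> : ((2 ^ n)%N)%:R = ((2 ^ n).-1 + 1)%N%:R :> 'Z_((2 ^ n).-1).
  by congr (_%:R); rewrite addn1 prednK // expn_gt0.
by rewrite natrD (pchar_Zp Hp) add0r.
Qed.

Lemma not_realized n : (1 < n)%N -> ~ UC_realized_by_wVn n.
Proof.
move=> Hn H.
pose R := 'Z_((2 ^ n).-1).
pose h : R := 2 ^+ n.-1.
have Hh : 2 * h = 1 by rewrite /h -exprS prednK ?two_pow_Zp // ltnW.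
have tn := two_pow_Zp Hn.
have := clos_P (@aopI R 2 h) (aopK Hh) (@aopD R 2 h) (aopN Hh tn) (H _ _ ce_UC).
move=> [_ H2].
exact: (ce_notPP Hh (H2 (ce_PP' Hh))).
Qed.

End N2.

Theorem corollary5p3 (n : nat) (hn : 0 < n) : UC_realized_by_wVn n <-> n = 1.
Proof.
split.
- case: n hn => [|[|n]] // _ H; exfalso; exact: (@not_realized n.+2 isT H).
- move=> ->; exact: UC_realized1.
Qed.
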